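(* With $i=\sqrt{-1}$, \begin{align*} \overline{S}(i,q)&=\sum_{n=1}^\infty q^{n^2}-\sum_{n=1}^\infty(-1)^nq^{2n^2},\\ \overline{S}_1(i,q)&=\sum_{n=1}^\infty q^{(2n-1)^2},\\ \overline{S}_2(i,q)&=\sum_{n=1}^\infty q^{(2n)^2}-\sum_{n=1}^\infty(-1)^nq^{2n^2}. \end{align*}
   Context: $(a;q)_\infty=\prod_{k\ge0}(1-aq^k)$. Define \begin{align*} \overline{S}(z,q)&=\sum_{n=1}^\infty\frac{q^n(-q^{n+1};q)_\infty(q^{n+1};q)_\infty}{(zq^n;q)_\infty(z^{-1}q^n;q)_\infty},\\ \overline{S}_1(z,q)&=\sum_{n=0}^\infty\frac{q^{2n+1}(-q^{2n+2};q)_\infty(q^{2n+2};q)_\infty}{(zq^{2n+1};q)_\infty(z^{-1}q^{2n+1};q)_\infty},\\ \overline{S}_2(z,q)&=\sum_{n=1}^\infty\frac{q^{2n}(-q^{2n+1};q)_\infty(q^{2n+1};q)_\infty}{(zq^{2n};q)_\infty(z^{-1}q^{2n};q)_\infty}. \end{align*} *)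

(* Defs.v *)
From Stdlib Require Import Reals.
From Coquelicot Require Import Coquelicot.
Open Scope C_scope.

(* Limit of a complex sequence, taken componentwise (total operator;
   meaningful when the sequence converges). *)
Definition CLim (u : nat -> C) : C :=
  (real (Lim_seq (fun n => fst (u n))), real (Lim_seq (fun n => snd (u n)))).

Fixpoint Cpsum (a : nat -> C) (N : nat) : C :=
  match N with O => 0 | S N' => Cpsum a N' + a N' end.

Definition CSeries (a : nat -> C) : C := CLim (Cpsum a).

Fixpoint qpoch_part (a q : C) (N : nat) : C :=
  match N with O => 1 | S N' => qpoch_part a q N' * (1 - a * pow_n q N') end.

Definition qpoch_inf (a q : C) : C := CLim (qpoch_part a q).

Definition Sbar (z q : C) : C :=
  CSeries (fun m => let n := S m in
    pow_n q n * qpoch_inf (- pow_n q (n+1)) q * qpoch_inf (pow_n q (n+1)) q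
    / (qpoch_inf (z * pow_n q n) q * qpoch_inf (/ z * pow_n q n) q)).

Definition Sbar1 (z q : C) : C :=
  CSeries (fun n =>
    pow_n q (2*n+1) * qpoch_inf (- pow_n q (2*n+2)) q * qpoch_inf (pow_n q (2*n+2)) q
    / (qpoch_inf (z * pow_n q (2*n+1)) q * qpoch_inf (/ z * pow_n q (2*n+1)) q)).

Definition Sbar2 (z q : C) : C :=
  CSeries (fun m => let n := S m in
    pow_n q (2*n) * qpoch_inf (- pow_n q (2*n+1)) q * qpoch_inf (pow_n q (2*n+1)) q
    / (qpoch_inf (z * pow_n q (2*n)) q * qpoch_inf (/ z * pow_n q (2*n)) q)).

(* Main.v *)
Require Import Defs.
From Stdlib Require Import Reals Lra Lia ZArith.
From Coquelicot Require Import Coquelicot.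
Open Scope C_scope.

Lemma pow_n_Cpow (q:C) n : @eq C (pow_n q n) (q ^ n).
Proof. induction n; simpl; [reflexivity| rewrite IHn; reflexivity]. Qed.

Definition Cconv (u : nat -> C) (l : C) := forall eps:R, (0 < eps)%R ->
  exists N, forall n, (N <= n)%nat -> (Cmod (u n - l) < eps)%R.

Lemma Cmod_minus_sym a b : Cmod (a - b) = Cmod (b - a).
Proof. replace (a - b) with (- (b - a)) by ring. apply Cmod_opp. Qed.

Lemma Cmod_tri3 a b c : (Cmod (a - c) <= Cmod (a - b) + Cmod (b - c))%R.
Proof. replace (a - c) with ((a - b) + (b - c)) by ring. apply Cmod_triangle. Qed.

Lemma Cmod_le_comp z : (Cmod z <= 2 * Rmax (Rabs (fst z)) (Rabs (snd z)))%R.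
Proof.
  pose proof (Cmod_2Rmax z). pose proof (Rmax_l (Rabs (fst z)) (Rabs (snd z))).
  pose proof (Rabs_pos (fst z)).
  assert (sqrt 2 <= 2)%R.
  { rewrite <- (sqrt_square 2) at 2 by lra. apply sqrt_le_1_alt. lra. }
  nra.
Qed.

Lemma CLim_correct u l : Cconv u l -> CLim u = l.
Proof.
  intros H. unfold CLim.
  assert (H1 : is_lim_seq (fun n => fst (u n)) (fst l)).
  { apply is_lim_seq_spec. intros eps. destruct (H eps (cond_pos eps)) as [N HN].
    exists N. intros n Hn. eapply Rle_lt_trans; [|apply (HN n Hn)].
    pose proof (Rmax_Cmod (u n - l)). pose proof (Rmax_l (Rabs (fst (u n - l))) (Rabs (snd (u n - l)))).
    simpl in *. unfold Rminus in *. lra. }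
  assert (H2 : is_lim_seq (fun n => snd (u n)) (snd l)).
  { apply is_lim_seq_spec. intros eps. destruct (H eps (cond_pos eps)) as [N HN].
    exists N. intros n Hn. eapply Rle_lt_trans; [|apply (HN n Hn)].
    pose proof (Rmax_Cmod (u n - l)). pose proof (Rmax_r (Rabs (fst (u n - l))) (Rabs (snd (u n - l)))).
    simpl in *. unfold Rminus in *. lra. }
  rewrite (is_lim_seq_unique _ _ H1), (is_lim_seq_unique _ _ H2). simpl.
  destruct l; reflexivity.
Qed.

Lemma Cconv_unique u a b : Cconv u a -> Cconv u b -> a = b.
Proof. intros Ha Hb. rewrite <- (CLim_correct _ _ Ha). apply CLim_correct; auto. Qed.

Lemma Cconv_const c : Cconv (fun _ => c) c.
Proof. intros eps He. exists 0%nat. intros. replace (c - c) with (RtoC 0) by ring. rewrite Cmod_0. auto. Qed.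

Lemma Cconv_ext u v l : (exists N, forall n, (N <= n)%nat -> u n = v n) -> Cconv u l -> Cconv v l.
Proof.
  intros [N0 HN0] H eps He. destruct (H eps He) as [N HN]. exists (max N N0).
  intros n Hn. rewrite <- HN0 by lia. apply HN; lia.
Qed.

Lemma Cconv_ext_all u v l : (forall n, u n = v n) -> Cconv u l -> Cconv v l.
Proof. intros H. apply Cconv_ext. exists 0%nat; auto. Qed.

Lemma Cconv_plus u v a b : Cconv u a -> Cconv v b -> Cconv (fun n => u n + v n) (a + b).
Proof.
  intros Hu Hv eps He. destruct (Hu (eps/2)%R ltac:(lra)) as [N1 H1].
  destruct (Hv (eps/2)%R ltac:(lra)) as [N2 H2]. exists (max N1 N2). intros n Hn.
  replace (u n + v n - (a + b)) with ((u n - a) + (v n - b)) by ring.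
  eapply Rle_lt_trans; [apply Cmod_triangle|]. specialize (H1 n ltac:(lia)). specialize (H2 n ltac:(lia)). lra.
Qed.

Lemma Cconv_opp u a : Cconv u a -> Cconv (fun n => - u n) (- a).
Proof.
  intros Hu eps He. destruct (Hu eps He) as [N H]. exists N. intros n Hn.
  replace (- u n - - a) with (- (u n - a)) by ring. rewrite Cmod_opp. auto.
Qed.

Lemma Cconv_minus u v a b : Cconv u a -> Cconv v b -> Cconv (fun n => u n - v n) (a - b).
Proof. intros. apply Cconv_plus; auto. apply Cconv_opp; auto. Qed.

Lemma Cconv_bounded u l : Cconv u l -> exists M, (0 <= M)%R /\ forall n, (Cmod (u n) <= M)%R.
Proof.
  intros H. destruct (H 1%R ltac:(lra)) as [N HN].
  assert (exists M, (0 <= M)%R /\ forall n, (n < N)%nat -> (Cmod (u n) <= M)%R) as [M [HM0 HM]].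
  { clear HN. induction N. exists 0%R. split; [lra| intros; lia].
    destruct IHN as [M [HM0 HM]]. exists (Rmax M (Cmod (u N))). split.
    apply Rle_trans with M; [auto|apply Rmax_l].
    intros n Hn. destruct (Nat.eq_dec n N). subst. apply Rmax_r.
    apply Rle_trans with M; [apply HM; lia|apply Rmax_l]. }
  exists (Rmax M (Cmod l + 1)). split. apply Rle_trans with M; [auto|apply Rmax_l].
  intros n. destruct (Nat.lt_ge_cases n N).
  - apply Rle_trans with M; [apply HM; auto|apply Rmax_l].
  - apply Rle_trans with (Cmod l + 1)%R; [|apply Rmax_r].
    specialize (HN n H0). replace (u n) with ((u n - l) + l) by ring.
    eapply Rle_trans; [apply Cmod_triangle|]. lra.
Qed.

Lemma Cconv_mult u v a b : Cconv u a -> Cconv v b -> Cconv (fun n => u n * v n) (a * b).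
Proof.
  intros Hu Hv. destruct (Cconv_bounded _ _ Hu) as [M [HM0 HM]].
  intros eps He.
  set (e1 := (eps / (2 * (Cmod b + 1)))%R). set (e2 := (eps / (2 * (M + 1)))%R).
  assert (Hb : (0 <= Cmod b)%R) by apply Cmod_ge_0.
  assert (He1 : (0 < e1)%R) by (unfold e1; apply Rdiv_lt_0_compat; lra).
  assert (He2 : (0 < e2)%R) by (unfold e2; apply Rdiv_lt_0_compat; lra).
  destruct (Hu e1 He1) as [N1 H1]. destruct (Hv e2 He2) as [N2 H2].
  exists (max N1 N2). intros n Hn.
  replace (u n * v n - a * b) with (u n * (v n - b) + (u n - a) * b) by ring.
  eapply Rle_lt_trans; [apply Cmod_triangle|]. rewrite !Cmod_mult.
  specialize (H1 n ltac:(lia)). specialize (H2 n ltac:(lia)). specialize (HM n).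
  pose proof (Cmod_ge_0 (v n - b)). pose proof (Cmod_ge_0 (u n - a)).
  assert (A1 : (Cmod (u n) * Cmod (v n - b) <= M * e2)%R) by (apply Rmult_le_compat; auto; try lra; apply Cmod_ge_0).
  assert (A2 : (Cmod (u n - a) * Cmod b <= e1 * Cmod b)%R) by (apply Rmult_le_compat_r; lra).
  assert (M * e2 < eps/2)%R.
  { unfold e2. apply Rlt_le_trans with ((M+1) * (eps / (2 * (M + 1))))%R.
    apply Rmult_lt_compat_r; [apply Rdiv_lt_0_compat; lra| lra]. right. field. lra. }
  assert (E1 : (e1 * (Cmod b + 1) = eps/2)%R) by (unfold e1; field; lra).
  assert (e1 * Cmod b < eps/2)%R by nra.
  lra.
Qed.

Lemma Cconv_scal c u a : Cconv u a -> Cconv (fun n => c * u n) (c * a).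
Proof. intros. apply Cconv_mult; auto. apply Cconv_const. Qed.

Lemma Cconv_lb u l : Cconv u l -> l <> 0 -> (forall n, u n <> 0) ->
  exists d, (0 < d)%R /\ forall n, (d <= Cmod (u n))%R.
Proof.
  intros H Hl Hu. assert (Hl' : (0 < Cmod l)%R) by (apply Cmod_gt_0; auto).
  destruct (H (Cmod l / 2)%R ltac:(lra)) as [N HN].
  assert (exists d, (0 < d)%R /\ forall n, (n < N)%nat -> (d <= Cmod (u n))%R) as [d [Hd HdN]].
  { clear HN. induction N. exists 1%R. split; [lra| intros; lia].
    destruct IHN as [d [Hd0 Hd]]. exists (Rmin d (Cmod (u N))). split.
    apply Rmin_glb_lt; auto. apply Cmod_gt_0; auto.
    intros n Hn. destruct (Nat.eq_dec n N). subst. apply Rmin_r.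
    apply Rle_trans with d; [apply Rmin_l|apply Hd; lia]. }
  exists (Rmin d (Cmod l / 2)). split. apply Rmin_glb_lt; lra.
  intros n. destruct (Nat.lt_ge_cases n N).
  - apply Rle_trans with d; [apply Rmin_l|apply HdN; auto].
  - apply Rle_trans with (Cmod l / 2)%R; [apply Rmin_r|].
    specialize (HN n H0). pose proof (Cmod_tri3 l (u n) 0).
    replace (l - 0) with l in H1 by ring. replace (u n - 0) with (u n) in H1 by ring.
    rewrite Cmod_minus_sym in H1. lra.
Qed.

Lemma Cconv_inv u l : Cconv u l -> l <> 0 -> (forall n, u n <> 0) -> Cconv (fun n => / u n) (/ l).
Proof.
  intros H Hl Hu. destruct (Cconv_lb _ _ H Hl Hu) as [d [Hd Hdn]].
  assert (Hl' : (0 < Cmod l)%R) by (apply Cmod_gt_0; auto).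
  intros eps He. destruct (H (eps * d * Cmod l)%R ltac:(apply Rmult_lt_0_compat; [apply Rmult_lt_0_compat|]; lra)) as [N HN].
  exists N. intros n Hn.
  replace (/ u n - / l) with ((l - u n) * (/ u n * / l)) by (field; auto).
  rewrite !Cmod_mult, !Cmod_inv by auto. rewrite Cmod_minus_sym.
  specialize (HN n Hn). specialize (Hdn n).
  apply Rle_lt_trans with (Cmod (u n - l) * (/ d * / Cmod l))%R.
  apply Rmult_le_compat_l. apply Cmod_ge_0. apply Rmult_le_compat_r.
  left; apply Rinv_0_lt_compat; auto. apply Rinv_le_contravar; auto.
  apply Rlt_le_trans with ((eps * d * Cmod l) * (/ d * / Cmod l))%R.
  apply Rmult_lt_compat_r; auto. apply Rmult_lt_0_compat; apply Rinv_0_lt_compat; auto.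
  right. field. split; lra.
Qed.

Lemma Cconv_subseq u l (phi : nat -> nat) : (forall n, (n <= phi n)%nat) -> Cconv u l -> Cconv (fun n => u (phi n)) l.
Proof. intros Hp H eps He. destruct (H eps He) as [N HN]. exists N. intros. apply HN. specialize (Hp n). lia. Qed.

Lemma Cconv_shift_inv u l k : Cconv (fun n => u (n + k)%nat) l -> Cconv u l.
Proof. intros H eps He. destruct (H eps He) as [N HN]. exists (N + k)%nat. intros n Hn.
  replace n with ((n - k) + k)%nat by lia. apply HN. lia. Qed.

Lemma Cconv_shift u l k : Cconv u l -> Cconv (fun n => u (n + k)%nat) l.
Proof. intros. apply Cconv_subseq; auto. intros; lia. Qed.

Lemma Ccauchy u : (forall eps, (0 < eps)%R -> exists N, forall n m, (N <= n)%nat -> (N <= m)%nat -> (Cmod (u n - u m) < eps)%R) ->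
  exists l, Cconv u l.
Proof.
  intros H.
  assert (H1 : Cauchy_crit (fun n => fst (u n))).
  { intros eps He. destruct (H eps He) as [N HN]. exists N. intros n m Hn Hm.
    unfold Rdist. eapply Rle_lt_trans; [|apply (HN n m Hn Hm)].
    pose proof (Rmax_Cmod (u n - u m)). pose proof (Rmax_l (Rabs (fst (u n - u m))) (Rabs (snd (u n - u m)))).
    simpl in *. unfold Rminus in *. lra. }
  assert (H2 : Cauchy_crit (fun n => snd (u n))).
  { intros eps He. destruct (H eps He) as [N HN]. exists N. intros n m Hn Hm.
    unfold Rdist. eapply Rle_lt_trans; [|apply (HN n m Hn Hm)].
    pose proof (Rmax_Cmod (u n - u m)). pose proof (Rmax_r (Rabs (fst (u n - u m))) (Rabs (snd (u n - u m)))).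
    simpl in *. unfold Rminus in *. lra. }
  destruct (Rcomplete.R_complete _ H1) as [l1 Hl1].
  destruct (Rcomplete.R_complete _ H2) as [l2 Hl2].
  exists (l1, l2). intros eps He.
  destruct (Hl1 (eps/2)%R ltac:(lra)) as [N1 HN1]. destruct (Hl2 (eps/2)%R ltac:(lra)) as [N2 HN2].
  exists (max N1 N2). intros n Hn. eapply Rle_lt_trans; [apply Cmod_le_comp|].
  specialize (HN1 n ltac:(lia)). specialize (HN2 n ltac:(lia)). unfold Rdist in *. simpl.
  unfold Rminus in *. apply Rmax_case; lra.
Qed.

Lemma Cpsum_S a n : Cpsum a (S n) = Cpsum a n + a n.
Proof. reflexivity. Qed.

Lemma Cpsum_ext a b n : (forall k, (k < n)%nat -> a k = b k) -> Cpsum a n = Cpsum b n.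
Proof. induction n; intros H; simpl; auto. rewrite IHn by (intros; apply H; lia). rewrite H by lia. auto. Qed.

Lemma Cpsum_plus a b n : Cpsum (fun k => a k + b k) n = Cpsum a n + Cpsum b n.
Proof. induction n; simpl. ring. rewrite IHn. ring. Qed.

Lemma Cpsum_minus a b n : Cpsum (fun k => a k - b k) n = Cpsum a n - Cpsum b n.
Proof. induction n; simpl. ring. rewrite IHn. ring. Qed.

Lemma Cpsum_scal c a n : Cpsum (fun k => c * a k) n = c * Cpsum a n.
Proof. induction n; simpl. ring. rewrite IHn. ring. Qed.

Lemma Cpsum_first a n : Cpsum a (S n) = a 0%nat + Cpsum (fun k => a (S k)) n.
Proof. induction n. simpl. ring. rewrite Cpsum_S, IHn, (Cpsum_S (fun k => a (S k))). ring. Qed.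

Lemma Cpsum_tele p n : Cpsum (fun k => p (S k) - p k) n = p n - p 0%nat.
Proof. induction n; simpl. ring. rewrite IHn. ring. Qed.

Lemma Cpsum_zero n : Cpsum (fun _ => 0) n = 0.
Proof. induction n; simpl; auto. rewrite IHn. ring. Qed.

Lemma Cpsum_even_odd a n : Cpsum a (2 * n) = Cpsum (fun k => a (2 * k)%nat) n + Cpsum (fun k => a (2 * k + 1)%nat) n.
Proof.
  induction n. simpl. ring. replace (2 * S n)%nat with (S (S (2 * n))) by lia.
  rewrite !Cpsum_S, IHn.
  replace (S (2 * n)) with (2 * n + 1)%nat by lia. ring.
Qed.

Lemma pow_small r : (0 <= r < 1)%R -> forall y, (0 < y)%R -> exists N, forall n, (N <= n)%nat -> (r ^ n < y)%R.
Proof.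
  intros Hr y Hy. destruct (pow_lt_1_zero r ltac:(rewrite Rabs_pos_eq; lra) y Hy) as [N HN].
  exists N. intros n Hn. specialize (HN n Hn). rewrite Rabs_pos_eq in HN; auto. apply pow_le; lra.
Qed.

Definition Csum a S := Cconv (Cpsum a) S.

Lemma geom_sum a (K r : R) : (0 <= r < 1)%R -> (forall n, Cmod (a n) <= K * r ^ n)%R ->
  exists S, Csum a S /\ forall M, (Cmod (S - Cpsum a M) <= K * r ^ M / (1 - r))%R.
Proof.
  intros Hr Ha.
  assert (HK : (0 <= K)%R) by (pose proof (Ha 0%nat); pose proof (Cmod_ge_0 (a 0%nat)); simpl in *; lra).
  assert (H1 : forall M k, (Cmod (Cpsum a (M + k) - Cpsum a M) <= K * r ^ M * (1 - r ^ k) / (1 - r))%R).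
  { intros M k. induction k.
    - rewrite Nat.add_0_r. replace (Cpsum a M - Cpsum a M) with (RtoC 0) by ring. rewrite Cmod_0.
      simpl. right. field. lra.
    - replace (M + S k)%nat with (S (M + k)) by lia. rewrite Cpsum_S.
      replace (Cpsum a (M + k) + a (M + k)%nat - Cpsum a M) with ((Cpsum a (M + k) - Cpsum a M) + a (M + k)%nat) by ring.
      eapply Rle_trans; [apply Cmod_triangle|]. specialize (Ha (M + k)%nat). rewrite pow_add in Ha.
      apply Rle_trans with (K * r ^ M * (1 - r ^ k) / (1 - r) + K * (r ^ M * r ^ k))%R; [lra|].
      right. simpl. field. lra. }
  assert (H2 : forall M k, (Cmod (Cpsum a (M + k) - Cpsum a M) <= K * r ^ M / (1 - r))%R).
  { intros M k. eapply Rle_trans; [apply H1|]. unfold Rdiv. apply Rmult_le_compat_r.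
    left; apply Rinv_0_lt_compat; lra. pose proof (pow_le r k ltac:(lra)). pose proof (pow_le r M ltac:(lra)).
    assert (0 <= K * r ^ M)%R by (apply Rmult_le_pos; auto). nra. }
  destruct (Ccauchy (Cpsum a)) as [S HS].
  { intros eps He. destruct (pow_small r Hr (eps * (1 - r) / (2 * (K + 1)))%R) as [N HN].
    { apply Rdiv_lt_0_compat; [apply Rmult_lt_0_compat|]; lra. }
    exists N. intros n m Hn Hm.
    eapply Rle_lt_trans; [apply (Cmod_tri3 _ (Cpsum a N))|].
    replace n with (N + (n - N))%nat at 1 by lia. replace m with (N + (m - N))%nat by lia.
    rewrite (Cmod_minus_sym (Cpsum a N)).
    pose proof (H2 N (n - N)%nat). pose proof (H2 N (m - N)%nat). specialize (HN N (le_n N)).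
    assert (K * r ^ N / (1 - r) < eps / 2)%R.
    { apply Rle_lt_trans with ((K + 1) * r ^ N / (1 - r))%R.
      unfold Rdiv. apply Rmult_le_compat_r. left; apply Rinv_0_lt_compat; lra.
      pose proof (pow_le r N ltac:(lra)). nra.
      apply Rlt_le_trans with ((K + 1) * (eps * (1 - r) / (2 * (K + 1))) / (1 - r))%R.
      unfold Rdiv. apply Rmult_lt_compat_r. apply Rinv_0_lt_compat; lra.
      apply Rmult_lt_compat_l; lra. right. field. lra. }
    lra. }
  exists S. split; auto. intros M. apply Rle_plus_epsilon. intros eps He.
  destruct (HS eps He) as [N HN].
  eapply Rle_trans; [apply (Cmod_tri3 _ (Cpsum a (M + N)))|].
  specialize (HN (M + N)%nat ltac:(lia)). rewrite Cmod_minus_sym in HN.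
  specialize (H2 M N). lra.
Qed.

Lemma Csum_CSeries a A : Csum a A -> CSeries a = A.
Proof. apply CLim_correct. Qed.

Lemma Csum_shift a A : Csum a A -> Csum (fun k => a (S k)) (A - a 0%nat).
Proof.
  intros H. unfold Csum. apply Cconv_ext_all with (fun n => Cpsum a (S n) - a 0%nat).
  intros. rewrite Cpsum_first. ring.
  apply Cconv_minus; [|apply Cconv_const]. apply (Cconv_subseq _ _ S); auto.
Qed.

Lemma Csum_plus a b A B : Csum a A -> Csum b B -> Csum (fun k => a k + b k) (A + B).
Proof. intros. unfold Csum. eapply Cconv_ext_all. intros; symmetry; apply Cpsum_plus. apply Cconv_plus; auto. Qed.

Lemma Csum_minus a b A B : Csum a A -> Csum b B -> Csum (fun k => a k - b k) (A - B).
Proof. intros. unfold Csum. eapply Cconv_ext_all. intros; symmetry; apply Cpsum_minus. apply Cconv_minus; auto. Qed.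

Lemma Csum_scal c a A : Csum a A -> Csum (fun k => c * a k) (c * A).
Proof. intros. unfold Csum. eapply Cconv_ext_all. intros; symmetry; apply Cpsum_scal. apply Cconv_scal; auto. Qed.

Lemma Csum_ext a b A : (forall k, a k = b k) -> Csum a A -> Csum b A.
Proof. intros H. unfold Csum. apply Cconv_ext_all. intros. apply Cpsum_ext. auto. Qed.

Lemma Csum_even_odd a A E O : Csum a A -> Csum (fun k => a (2 * k)%nat) E -> Csum (fun k => a (2 * k + 1)%nat) O -> A = E + O.
Proof.
  intros HA HE HO. apply (Cconv_unique (fun n => Cpsum a (2 * n))).
  apply Cconv_subseq; auto. intros; lia.
  eapply Cconv_ext_all. intros; symmetry; apply Cpsum_even_odd. apply Cconv_plus; auto.
Qed.

Fixpoint Cprod (f : nat -> C) (n : nat) : C :=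
  match n with O => 1 | S n' => Cprod f n' * f n' end.

Lemma prod_conv (e : nat -> C) (K r : R) : (0 <= r < 1)%R -> (forall n, Cmod (e n) <= K * r ^ n)%R ->
  exists L, Cconv (Cprod (fun k => 1 + e k)) L.
Proof.
  intros Hr He.
  assert (HK : (0 <= K)%R) by (pose proof (He 0%nat); pose proof (Cmod_ge_0 (e 0%nat)); simpl in *; lra).
  set (P := Cprod (fun k => 1 + e k)).
  assert (HB : forall n, (Cmod (P n) <= exp (K * (1 - r ^ n) / (1 - r)))%R).
  { induction n. simpl. unfold P; simpl. rewrite Cmod_1. replace (K * (1 - 1) / (1 - r))%R with 0%R by (field; lra).
    rewrite exp_0. lra.
    unfold P; simpl. fold P. rewrite Cmod_mult.
    apply Rle_trans with (exp (K * (1 - r ^ n) / (1 - r)) * exp (K * r ^ n))%R.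
    apply Rmult_le_compat; auto; try apply Cmod_ge_0.
    eapply Rle_trans; [apply Cmod_triangle|]. rewrite Cmod_1. specialize (He n).
    pose proof (exp_ineq1_le (K * r ^ n)). lra.
    rewrite <- exp_plus. right. f_equal. field. lra. }
  assert (HB2 : forall n, (Cmod (P n) <= exp (K / (1 - r)))%R).
  { intros n. eapply Rle_trans; [apply HB|]. destruct (Rle_lt_or_eq_dec (K * (1 - r ^ n) / (1 - r)) (K / (1 - r))).
    unfold Rdiv. apply Rmult_le_compat_r. left; apply Rinv_0_lt_compat; lra.
    pose proof (pow_le r n ltac:(lra)). nra.
    left. apply exp_increasing; auto. rewrite e0. lra. }
  destruct (geom_sum (fun k => P (S k) - P k) (exp (K / (1 - r)) * K) r Hr) as [Sm [HS _]].
  { intros n. unfold P; simpl. fold P. replace (P n * (1 + e n) - P n) with (P n * e n) by ring.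
    rewrite Cmod_mult. rewrite Rmult_assoc. apply Rmult_le_compat; auto; apply Cmod_ge_0. }
  exists (1 + Sm). apply Cconv_ext_all with (fun n => 1 + Cpsum (fun k => P (S k) - P k) n). intros n. rewrite Cpsum_tele. assert (P 0%nat = 1) as -> by reflexivity. ring.
  apply Cconv_plus. apply Cconv_const. auto.
Qed.

Lemma Cprod_S f n : Cprod f (S n) = Cprod f n * f n.
Proof. reflexivity. Qed.

Lemma Cprod_ext f g n : (forall k, (k < n)%nat -> f k = g k) -> Cprod f n = Cprod g n.
Proof. induction n; intros H; simpl; auto. rewrite IHn by (intros; apply H; lia). rewrite H by lia. auto. Qed.

Lemma Cprod_split f n m : Cprod f (n + m) = Cprod f n * Cprod (fun k => f (n + k)%nat) m.
Proof. induction m. rewrite Nat.add_0_r. simpl. ring. replace (n + S m)%nat with (S (n + m)) by lia. simpl. rewrite IHm. ring. Qed.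

Lemma Cprod_mult f g n : Cprod (fun k => f k * g k) n = Cprod f n * Cprod g n.
Proof. induction n; simpl. ring. rewrite IHn. ring. Qed.

Lemma Cprod_one n : Cprod (fun _ => 1) n = 1.
Proof. induction n; simpl; auto. rewrite IHn. ring. Qed.

Lemma Cprod_even_odd f n : Cprod f (2 * n) = Cprod (fun k => f (2 * k)%nat) n * Cprod (fun k => f (2 * k + 1)%nat) n.
Proof.
  induction n. simpl. ring. replace (2 * S n)%nat with (S (S (2 * n))) by lia.
  rewrite !Cprod_S, IHn. replace (S (2 * n)) with (2 * n + 1)%nat by lia. ring.
Qed.

Lemma Cpow_add (q : C) n m : q ^ (n + m) = q ^ n * q ^ m.
Proof. induction n; simpl. ring. rewrite IHn. ring. Qed.

Lemma Cpow_mul (q : C) n m : q ^ (n * m) = (q ^ n) ^ m.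
Proof. induction m. rewrite Nat.mul_0_r. auto. replace (n * S m)%nat with (n + n * m)%nat by lia.
  rewrite Cpow_add, IHm. simpl. auto. Qed.

Lemma Cpow_mult (a b : C) n : (a * b) ^ n = a ^ n * b ^ n.
Proof. induction n; simpl. ring. rewrite IHn. ring. Qed.

Lemma qp_Cprod a q n : qpoch_part a q n = Cprod (fun k => 1 - a * q ^ k) n.
Proof. induction n; simpl; auto. rewrite IHn, (pow_n_Cpow q n). auto. Qed.

Lemma Cconv_pow q : (Cmod q < 1)%R -> Cconv (fun n => q ^ n) 0.
Proof.
  intros Hq eps He. destruct (pow_small (Cmod q) ltac:(split; [apply Cmod_ge_0|auto]) eps He) as [N HN].
  exists N. intros n Hn. replace (q ^ n - 0) with (q ^ n) by ring. rewrite Cmod_pow. auto.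
Qed.

Lemma qp_conv_ex a q : (Cmod q < 1)%R -> exists L, Cconv (qpoch_part a q) L.
Proof.
  intros Hq. destruct (prod_conv (fun k => - a * q ^ k) (Cmod a) (Cmod q)) as [L HL].
  split; auto. apply Cmod_ge_0.
  intros n. rewrite Cmod_mult, Cmod_opp, Cmod_pow. lra.
  exists L. eapply Cconv_ext_all; [|exact HL]. intros n. rewrite qp_Cprod. apply Cprod_ext. intros. ring.
Qed.

Lemma qp_conv a q : (Cmod q < 1)%R -> Cconv (qpoch_part a q) (qpoch_inf a q).
Proof.
  intros Hq. destruct (qp_conv_ex a q Hq) as [L HL]. unfold qpoch_inf. rewrite (CLim_correct _ _ HL). auto.
Qed.

Lemma qp_split a q n m : qpoch_part a q (n + m) = qpoch_part a q n * qpoch_part (a * pow_n q n) q m.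
Proof.
  rewrite !qp_Cprod, Cprod_split. apply f_equal. apply Cprod_ext. intros. rewrite (pow_n_Cpow q n), Cpow_add. ring.
Qed.

Lemma qi_split a q n : (Cmod q < 1)%R -> qpoch_inf a q = qpoch_part a q n * qpoch_inf (a * pow_n q n) q.
Proof.
  intros Hq. apply (Cconv_unique (fun m => qpoch_part a q (n + m))).
  eapply Cconv_ext_all; [|apply (Cconv_shift _ _ n (qp_conv a q Hq))]. intros x. simpl. rewrite Nat.add_comm. reflexivity.
  eapply Cconv_ext_all. intros m. symmetry. apply qp_split.
  apply Cconv_scal. apply qp_conv; auto.
Qed.

Lemma qi_mult a b q1 q2 c q : (Cmod q1 < 1)%R -> (Cmod q2 < 1)%R -> (Cmod q < 1)%R ->
  (forall n, qpoch_part a q1 n * qpoch_part b q2 n = qpoch_part c q n) ->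
  qpoch_inf a q1 * qpoch_inf b q2 = qpoch_inf c q.
Proof.
  intros H1 H2 H3 H. apply (Cconv_unique (qpoch_part c q)).
  eapply Cconv_ext_all. apply H. apply Cconv_mult; apply qp_conv; auto. apply qp_conv; auto.
Qed.

Lemma qi_nonzero a q : (Cmod q < 1)%R -> (forall k, 1 - a * q ^ k <> 0) -> qpoch_inf a q <> 0.
Proof.
  intros Hq Hf.
  assert (Hc : Cconv (fun k => 1 - a * q ^ k) 1).
  { assert (H0 : Cconv (fun k => 1 - a * q ^ k) (1 - a * 0)).
    { apply Cconv_minus. apply Cconv_const. apply Cconv_scal. apply Cconv_pow; auto. }
    replace (1 - a * 0) with (RtoC 1) in H0 by ring. exact H0. }
  destruct (Cconv_lb _ _ Hc ltac:(intro E; injection E; lra) Hf) as [d [Hd Hdn]].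
  destruct (prod_conv (fun k => a * q ^ k / (1 - a * q ^ k)) (Cmod a / d) (Cmod q)) as [L HL].
  split; auto. apply Cmod_ge_0.
  { intros n. rewrite Cmod_div by auto. rewrite Cmod_mult, Cmod_pow.
    unfold Rdiv. specialize (Hdn n). pose proof (Cmod_ge_0 a). pose proof (pow_le (Cmod q) n (Cmod_ge_0 q)).
    replace (Cmod a * / d * Cmod q ^ n)%R with (Cmod a * Cmod q ^ n * / d)%R by ring.
    apply Rmult_le_compat_l. apply Rmult_le_pos; auto. apply Rinv_le_contravar; auto. }
  intros E.
  assert (Cconv (fun n => qpoch_part a q n * Cprod (fun k => 1 + a * q ^ k / (1 - a * q ^ k)) n) (qpoch_inf a q * L)).
  { apply Cconv_mult; auto. apply qp_conv; auto. }
  rewrite E in H. replace (0 * L) with (RtoC 0) in H by ring.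
  assert (Cconv (fun n => qpoch_part a q n * Cprod (fun k => 1 + a * q ^ k / (1 - a * q ^ k)) n) (RtoC 1)).
  { refine (Cconv_ext_all (fun _ => RtoC 1) _ _ _ (Cconv_const _)). intros n. rewrite qp_Cprod, <- Cprod_mult.
    rewrite <- (Cprod_one n) at 1. apply Cprod_ext. intros k _. field. auto. }
  pose proof (Cconv_unique _ _ _ H H0). injection H1. lra.
Qed.

Ltac zring := apply Nat2Z.inj; repeat first [rewrite Nat2Z.inj_mul | rewrite Nat2Z.inj_add | rewrite Nat2Z.inj_sub by lia | rewrite Nat2Z.inj_succ | rewrite Nat2Z.inj_0]; unfold Z.succ; ring.

Lemma Cpow_eq (q : C) a b : a = b -> q ^ a = q ^ b.
Proof. intros ->. auto. Qed.

Lemma Cprod_first f n : Cprod f (S n) = f 0%nat * Cprod (fun k => f (S k)) n.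
Proof. induction n. simpl. ring. rewrite Cprod_S, IHn, (Cprod_S (fun k => f (S k))). ring. Qed.

Lemma Cprod_rev f n : Cprod (fun j => f (n - 1 - j)%nat) n = Cprod f n.
Proof.
  induction n. auto. rewrite Cprod_first, Cprod_S. rewrite <- IHn.
  replace (S n - 1 - 0)%nat with n by lia. rewrite Cmult_comm. f_equal.
  apply Cprod_ext. intros. f_equal. lia.
Qed.

Lemma Cprod_const c n : Cprod (fun _ => c) n = c ^ n.
Proof. induction n; simpl; auto. rewrite IHn. ring. Qed.

Lemma Cpsum_split a n m : Cpsum a (n + m) = Cpsum a n + Cpsum (fun k => a (n + k)%nat) m.
Proof. induction m. rewrite Nat.add_0_r. simpl. ring. replace (n + S m)%nat with (S (n + m)) by lia.
  rewrite !Cpsum_S, IHm. ring. Qed.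

Lemma Cpsum_rev a n : Cpsum (fun j => a (n - 1 - j)%nat) n = Cpsum a n.
Proof.
  induction n. auto. rewrite Cpsum_first, Cpsum_S. rewrite <- IHn.
  replace (S n - 1 - 0)%nat with n by lia. rewrite Cplus_comm. f_equal.
  apply Cpsum_ext. intros. f_equal. lia.
Qed.

Lemma Cprod_pow2 (q : C) N : Cprod (fun j => q ^ (2 * j)) N = q ^ (N * (N - 1)).
Proof.
  induction N. auto. rewrite Cprod_S, IHN, <- Cpow_add. apply Cpow_eq.
  destruct N. auto. zring.
Qed.

Fixpoint G (q : C) (M k : nat) : C :=
  match M, k with
  | O, O => 1
  | O, S _ => 0
  | S M', O => 1
  | S M', S k' => G q M' (S k') + q ^ (2 * (M' - k')) * G q M' k'
  end.

Lemma G_zero q M k : (M < k)%nat -> G q M k = 0.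
Proof.
  revert k. induction M; intros k Hk; destruct k; try lia; simpl; auto.
  rewrite !IHM by lia. ring.
Qed.

Lemma G_0 q M : G q M 0 = 1.
Proof. destruct M; auto. Qed.

Lemma G_SS q M k : G q (S M) (S k) = G q M (S k) + q ^ (2 * (M - k)) * G q M k.
Proof. reflexivity. Qed.

Definition Pq (q : C) n := Cprod (fun j => 1 - q ^ (2 * (j + 1))) n.

Lemma G_closed q M k : (k <= M)%nat -> G q M k * Pq q k * Pq q (M - k) = Pq q M.
Proof.
  revert k. induction M; intros k Hk.
  - destruct k; [|lia]. simpl. unfold Pq. simpl. ring.
  - destruct k. rewrite G_0, Nat.sub_0_r. assert (E0 : Pq q 0 = 1) by reflexivity. rewrite E0. ring.
    rewrite G_SS. destruct (Nat.eq_dec k M).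
    + subst. rewrite G_zero by lia. replace (S M - S M)%nat with 0%nat by lia.
      replace (2 * (M - M))%nat with 0%nat by lia. specialize (IHM M (le_n M)).
      rewrite Nat.sub_diag in IHM. assert (E0 : Pq q 0 = 1) by reflexivity. rewrite E0 in *.
      assert (E : Pq q (S M) = Pq q M * (1 - q ^ (2 * (M + 1)))) by reflexivity. rewrite E.
      transitivity ((G q M M * Pq q M * 1) * (1 - q ^ (2 * (M + 1)))). ring. rewrite IHM. ring.
    + pose proof (IHM (S k) ltac:(lia)) as I1. pose proof (IHM k ltac:(lia)) as I2.
      replace (S M - S k)%nat with (M - k)%nat by lia.
      assert (E1 : Pq q (S k) = Pq q k * (1 - q ^ (2 * (k + 1)))) by reflexivity.
      assert (E2 : Pq q (M - k) = Pq q (M - S k) * (1 - q ^ (2 * (M - k)))).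
      { replace (M - k)%nat with (S (M - S k)) at 1 by lia. unfold Pq. rewrite Cprod_S. do 3 f_equal. lia. }
      assert (E3 : Pq q (S M) = Pq q M * (1 - q ^ (2 * (k + 1)) * q ^ (2 * (M - k)))).
      { unfold Pq. rewrite Cprod_S. fold (Pq q M). do 2 f_equal. rewrite <- Cpow_add. apply Cpow_eq. lia. }
      rewrite E1 in I1. rewrite E2 in I2. rewrite E1, E2, E3.
      set (s := q ^ (2 * (k + 1))) in *. set (t := q ^ (2 * (M - k))) in *.
      transitivity ((1 - t) * (G q M (S k) * (Pq q k * (1 - s)) * Pq q (M - S k)) + t * (1 - s) * (G q M k * Pq q k * (Pq q (M - S k) * (1 - t)))).
      ring. rewrite I1, I2. ring.
Qed.

Lemma Rothe q y M : Cprod (fun j => y + q ^ (2 * j)) M = Cpsum (fun k => G q M k * q ^ (k * (k - 1)) * y ^ (M - k)) (S M).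
Proof.
  induction M.
  - simpl. ring.
  - rewrite Cprod_S, IHM. symmetry. rewrite Cpsum_first. symmetry. simpl G at 1. rewrite Nat.sub_0_r.
    transitivity (y * Cpsum (fun k : nat => G q M k * q ^ (k * (k - 1)) * y ^ (M - k)) (S M) +
                  q ^ (2 * M) * Cpsum (fun k : nat => G q M k * q ^ (k * (k - 1)) * y ^ (M - k)) (S M)). ring.
    rewrite <- !Cpsum_scal. rewrite (Cpsum_first (fun k => y * _)).
    rewrite G_0. simpl (0 * (0 - 1))%nat. rewrite Nat.sub_0_r.
    assert (A : Cpsum (fun k => G q (S M) (S k) * q ^ (S k * (S k - 1)) * y ^ (S M - S k)) (S M) =
      Cpsum (fun k => G q M (S k) * q ^ (S k * (S k - 1)) * y ^ (S M - S k)) (S M) +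
      Cpsum (fun k => q ^ (2 * M) * (G q M k * q ^ (k * (k - 1)) * y ^ (M - k))) (S M)).
    { rewrite <- Cpsum_plus. apply Cpsum_ext. intros k Hk. rewrite G_SS.
      replace (S M - S k)%nat with (M - k)%nat by lia.
      assert (q ^ (2 * (M - k)) * q ^ (S k * (S k - 1)) = q ^ (2 * M) * q ^ (k * (k - 1))).
      { rewrite <- !Cpow_add. apply Cpow_eq. destruct k. simpl. lia. zring. }
      transitivity (G q M (S k) * q ^ (S k * (S k - 1)) * y ^ (M - k) + (q ^ (2 * (M - k)) * q ^ (S k * (S k - 1))) * G q M k * y ^ (M - k)).
      ring. rewrite H. ring. }
    rewrite A. rewrite (Cpsum_S (fun k => G q M (S k) * _ * _)). rewrite (G_zero q M (S M)) by lia.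
    assert (B : Cpsum (fun k => G q M (S k) * q ^ (S k * (S k - 1)) * y ^ (S M - S k)) M =
       Cpsum (fun k => y * (G q M (S k) * q ^ (S k * (S k - 1)) * y ^ (M - S k))) M).
    { apply Cpsum_ext. intros k Hk. replace (S M - S k)%nat with (S (M - S k)) by lia. simpl. ring. }
    rewrite B, G_0. change (y ^ S M) with (y * y ^ M). ring.
Qed.

Lemma Cpow_nz (q : C) n : q <> 0 -> q ^ n <> 0.
Proof.
  intros Hq E. apply Cmod_gt_0 in Hq. assert (Cmod (q ^ n) = 0%R) by (rewrite E; apply Cmod_0).
  rewrite Cmod_pow in H. pose proof (pow_lt (Cmod q) n Hq). lra.
Qed.

Lemma Cmult_nz (a b : C) : a <> 0 -> b <> 0 -> a * b <> 0.
Proof.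
  intros Ha Hb E. apply Cmod_gt_0 in Ha. apply Cmod_gt_0 in Hb.
  assert (Cmod (a * b) = 0%R) by (rewrite E; apply Cmod_0). rewrite Cmod_mult in H. nra.
Qed.

Lemma fin_jtp (q : C) (N : nat) : q <> 0 -> (1 <= N)%nat ->
  (Cprod (fun j => 1 + q ^ (2 * j + 1)) N) ^ 2 =
  Cpsum (fun m => G q (2 * N) (N - 1 - m) * q ^ ((m + 1) * (m + 1))) N +
  Cpsum (fun m => G q (2 * N) (N + m) * q ^ (m * m)) (N + 1).
Proof.
  intros Hq HN.
  set (y := q ^ (2 * N - 1)).
  set (Z := y ^ N * q ^ (N * (N - 1))).
  assert (HZ : Z <> 0) by (apply Cmult_nz; apply Cpow_nz; auto; apply Cpow_nz; auto).
  assert (Hy : forall j, y ^ j = q ^ ((2 * N - 1) * j)) by (intros; unfold y; rewrite Cpow_mul; auto).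
  pose proof (Rothe q y (2 * N)) as HR.
  replace (S (2 * N)) with (N + (N + 1))%nat in HR by lia.
  rewrite Cpsum_split, <- Cpsum_rev in HR.
  assert (H1 : Cprod (fun j => y + q ^ (2 * j)) (2 * N) = Z * (Cprod (fun j => 1 + q ^ (2 * j + 1)) N) ^ 2).
  { replace (2 * N)%nat with (N + N)%nat at 1 by lia. rewrite Cprod_split.
    rewrite (Cprod_ext (fun j => y + q ^ (2 * (N + j))) (fun j => y * (1 + q ^ (2 * j + 1)))).
    2: { intros j Hj. unfold y. rewrite Cmult_plus_distr_l, <- Cpow_add. f_equal. ring_simplify. f_equal. apply Cpow_eq. zring. }
    rewrite (Cprod_ext (fun j => y + q ^ (2 * j)) (fun j => q ^ (2 * j) * (fun i => 1 + q ^ (2 * i + 1)) (N - 1 - j)%nat)).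
    2: { intros j Hj. unfold y. simpl. rewrite Cmult_plus_distr_l, <- Cpow_add. rewrite Cplus_comm. f_equal. ring. apply Cpow_eq. zring. }
    rewrite !Cprod_mult, (Cprod_rev (fun i => 1 + q ^ (2 * i + 1)) N), Cprod_const, Cprod_pow2. unfold Z. simpl. ring. }
  rewrite H1 in HR. clear H1.
  assert (H2 : Cpsum (fun m => G q (2 * N) (N + m) * q ^ ((N + m) * (N + m - 1)) * y ^ (2 * N - (N + m))) (N + 1) =
               Z * Cpsum (fun m => G q (2 * N) (N + m) * q ^ (m * m)) (N + 1)).
  { rewrite <- Cpsum_scal. apply Cpsum_ext. intros m Hm. unfold Z. rewrite !Hy, <- !Cpow_add.
    transitivity (G q (2 * N) (N + m) * (q ^ ((N + m) * (N + m - 1)) * q ^ ((2 * N - 1) * (2 * N - (N + m))))). ring.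
    rewrite <- Cpow_add. transitivity (G q (2 * N) (N + m) * q ^ ((2 * N - 1) * N + N * (N - 1) + m * m)).
    f_equal. apply Cpow_eq. zring. rewrite !Cpow_add. ring. }
  assert (H3 : Cpsum (fun m => G q (2 * N) (N - 1 - m) * q ^ ((N - 1 - m) * (N - 1 - m - 1)) * y ^ (2 * N - (N - 1 - m))) N =
               Z * Cpsum (fun m => G q (2 * N) (N - 1 - m) * q ^ ((m + 1) * (m + 1))) N).
  { rewrite <- Cpsum_scal. apply Cpsum_ext. intros m Hm. unfold Z. rewrite !Hy, <- !Cpow_add.
    transitivity (G q (2 * N) (N - 1 - m) * (q ^ ((N - 1 - m) * (N - 1 - m - 1)) * q ^ ((2 * N - 1) * (2 * N - (N - 1 - m))))). ring.
    rewrite <- Cpow_add. transitivity (G q (2 * N) (N - 1 - m) * q ^ ((2 * N - 1) * N + N * (N - 1) + (m + 1) * (m + 1))).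
    f_equal. apply Cpow_eq. destruct (Nat.eq_dec m (N - 1)).
    subst m. replace (N - 1 - (N - 1))%nat with 0%nat by lia. replace (N - 1 + 1)%nat with N by lia. simpl. zring.
    zring. rewrite !Cpow_add. ring. }
  rewrite H2, H3 in HR.
  match goal with |- ?A = _ => replace A with ((Z * A) / Z) by (field; auto) end.
  rewrite HR. field. auto.
Qed.

Lemma pow_le1 (r : R) k : (0 <= r <= 1)%R -> (0 <= r ^ k <= 1)%R.
Proof. intros Hr. induction k; simpl; nra. Qed.

Lemma pow_le_mono (r : R) m n : (0 <= r <= 1)%R -> (m <= n)%nat -> (r ^ n <= r ^ m)%R.
Proof.
  intros Hr Hmn. replace n with (m + (n - m))%nat by lia. rewrite pow_add.
  pose proof (pow_le r m ltac:(lra)). pose proof (pow_le1 r (n - m) Hr). nra.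
Qed.

Lemma Cconv_le_bound u l B N0 : Cconv u l -> (forall n, (N0 <= n)%nat -> (Cmod (u n) <= B)%R) -> (Cmod l <= B)%R.
Proof.
  intros H HB. apply Rle_plus_epsilon. intros eps He. destruct (H eps He) as [N HN].
  specialize (HN (max N N0) ltac:(lia)). specialize (HB (max N N0) ltac:(lia)).
  pose proof (Cmod_tri3 l (u (max N N0)) 0). replace (l - 0) with l in H0 by ring.
  replace (u (max N N0) - 0) with (u (max N N0)) in H0 by ring. rewrite Cmod_minus_sym in H0. lra.
Qed.

Lemma Cconv_subn u l m : Cconv u l -> Cconv (fun n => u (n - m)%nat) l.
Proof. intros H eps He. destruct (H eps He) as [N HN]. exists (N + m)%nat. intros. apply HN. lia. Qed.

Lemma Cconv_Cpsum (g : nat -> nat -> C) h M : (forall m, Cconv (fun N => g N m) (h m)) ->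
  Cconv (fun N => Cpsum (g N) M) (Cpsum h M).
Proof.
  intros H. induction M. simpl. apply Cconv_const.
  simpl. apply Cconv_plus; auto.
Qed.

Lemma fin_geom a (K r : R) M n : (0 <= r < 1)%R -> (0 <= K)%R ->
  (forall k, (k < n)%nat -> (Cmod (a (M + k)%nat) <= K * r ^ (M + k))%R) ->
  (Cmod (Cpsum a (M + n) - Cpsum a M) <= K * r ^ M / (1 - r))%R.
Proof.
  intros Hr HK Ha.
  assert (H1 : forall k, (k <= n)%nat -> (Cmod (Cpsum a (M + k) - Cpsum a M) <= K * r ^ M * (1 - r ^ k) / (1 - r))%R).
  { intros k. induction k; intros Hk.
    - rewrite Nat.add_0_r. replace (Cpsum a M - Cpsum a M) with (RtoC 0) by ring. rewrite Cmod_0.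
      simpl. right. field. lra.
    - replace (M + S k)%nat with (S (M + k)) by lia. rewrite Cpsum_S.
      replace (Cpsum a (M + k) + a (M + k)%nat - Cpsum a M) with ((Cpsum a (M + k) - Cpsum a M) + a (M + k)%nat) by ring.
      eapply Rle_trans; [apply Cmod_triangle|]. specialize (Ha k ltac:(lia)). rewrite pow_add in Ha.
      specialize (IHk ltac:(lia)).
      apply Rle_trans with (K * r ^ M * (1 - r ^ k) / (1 - r) + K * (r ^ M * r ^ k))%R; [lra|].
      right. simpl. field. lra. }
  eapply Rle_trans; [apply H1; lia|]. unfold Rdiv. apply Rmult_le_compat_r.
  left; apply Rinv_0_lt_compat; lra. pose proof (pow_le r n ltac:(lra)). pose proof (pow_le r M ltac:(lra)).
  assert (0 <= K * r ^ M)%R by (apply Rmult_le_pos; auto). nra.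
Qed.

Lemma tannery (g : nat -> nat -> C) (h : nat -> C) (L : nat -> nat) (K r : R) :
  (0 <= r < 1)%R -> (forall N, (N <= L N)%nat) ->
  (forall N m, (m < L N)%nat -> (Cmod (g N m) <= K * r ^ m)%R) ->
  (forall m, Cconv (fun N => g N m) (h m)) ->
  exists H, Csum h H /\ Cconv (fun N => Cpsum (g N) (L N)) H.
Proof.
  intros Hr HL Hg Hh.
  assert (HK : (0 <= K)%R).
  { pose proof (Hg 1%nat 0%nat ltac:(specialize (HL 1%nat); lia)). pose proof (Cmod_ge_0 (g 1%nat 0%nat)). simpl in *. lra. }
  assert (Hhb : forall m, (Cmod (h m) <= K * r ^ m)%R).
  { intros m. apply (Cconv_le_bound _ _ _ (S m) (Hh m)). intros n Hn. apply Hg. specialize (HL n). lia. }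
  destruct (geom_sum h K r Hr Hhb) as [H [HS Htail]].
  exists H. split; auto. intros eps He.
  destruct (pow_small r Hr (eps * (1 - r) / (3 * (K + 1)))%R) as [M HM].
  { apply Rdiv_lt_0_compat; [apply Rmult_lt_0_compat|]; lra. }
  assert (Hsm : (K * r ^ M / (1 - r) < eps / 3)%R).
  { specialize (HM M (le_n M)). apply Rle_lt_trans with ((K + 1) * r ^ M / (1 - r))%R.
    unfold Rdiv. apply Rmult_le_compat_r. left; apply Rinv_0_lt_compat; lra.
    pose proof (pow_le r M ltac:(lra)). nra.
    apply Rlt_le_trans with ((K + 1) * (eps * (1 - r) / (3 * (K + 1))) / (1 - r))%R.
    unfold Rdiv. apply Rmult_lt_compat_r. apply Rinv_0_lt_compat; lra.
    apply Rmult_lt_compat_l; lra. right. field. lra. }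
  destruct (Cconv_Cpsum g h M Hh (eps / 3)%R ltac:(lra)) as [N1 HN1].
  exists (max N1 M). intros N HN.
  eapply Rle_lt_trans; [apply (Cmod_tri3 _ (Cpsum (g N) M))|].
  eapply Rle_lt_trans; [apply Rplus_le_compat_l; apply (Cmod_tri3 _ (Cpsum h M))|].
  assert (A1 : (Cmod (Cpsum (g N) (L N) - Cpsum (g N) M) <= K * r ^ M / (1 - r))%R).
  { replace (L N) with (M + (L N - M))%nat by (specialize (HL N); lia).
    apply fin_geom; auto. intros k Hk. apply Hg. specialize (HL N). lia. }
  specialize (HN1 N ltac:(lia)). specialize (Htail M). rewrite Cmod_minus_sym in Htail. lra.
Qed.

Lemma Cpow_sq (q : C) j : (q * q) ^ j = q ^ (2 * j).
Proof. rewrite Cpow_mult, <- Cpow_add. apply Cpow_eq. lia. Qed.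

Lemma Cmod_lt1_pow (x : C) k : (Cmod x < 1)%R -> (Cmod (x ^ S k) < 1)%R.
Proof. intros H. rewrite Cmod_pow. apply pow_lt_1_compat; [split; [apply Cmod_ge_0|auto]|lia]. Qed.

Lemma one_minus_nz (x : C) : (Cmod x < 1)%R -> 1 - x <> 0.
Proof. intros H E. assert (H0 : x = 1 - (1 - x)) by ring. rewrite E in H0. replace (1 - 0) with (RtoC 1) in H0 by ring.
  subst. rewrite Cmod_1 in H. lra. Qed.

Lemma CmodQ q : (Cmod q < 1)%R -> (Cmod (q * q) < 1)%R.
Proof. intros H. rewrite Cmod_mult. pose proof (Cmod_ge_0 q). nra. Qed.

Lemma Pq_qp q n : Pq q n = qpoch_part (q * q) (q * q) n.
Proof.
  unfold Pq. rewrite qp_Cprod. apply Cprod_ext. intros j _. f_equal.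
  change ((q * q) * (q * q) ^ j) with ((q * q) ^ (S j)). rewrite Cpow_sq. apply Cpow_eq. lia.
Qed.

Lemma Pq_conv q : (Cmod q < 1)%R -> Cconv (Pq q) (qpoch_inf (q * q) (q * q)).
Proof. intros H. eapply Cconv_ext_all. intros n; symmetry; apply Pq_qp. apply qp_conv. apply CmodQ; auto. Qed.

Lemma PQ_nz q : (Cmod q < 1)%R -> qpoch_inf (q * q) (q * q) <> 0.
Proof.
  intros H. apply qi_nonzero. apply CmodQ; auto. intros k.
  change ((q * q) * (q * q) ^ k) with ((q * q) ^ (S k)). apply one_minus_nz. apply Cmod_lt1_pow. apply CmodQ; auto.
Qed.

Lemma Pq_nz q n : (Cmod q < 1)%R -> Pq q n <> 0.
Proof.
  intros H. unfold Pq. induction n. simpl. intro E. injection E. lra.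
  rewrite Cprod_S. apply Cmult_nz; auto. replace (2 * (n + 1))%nat with (2 * S n)%nat by lia.
  rewrite <- Cpow_sq. apply one_minus_nz. apply Cmod_lt1_pow. apply CmodQ; auto.
Qed.

Lemma G_eq q M j : (Cmod q < 1)%R -> (j <= M)%nat -> G q M j = Pq q M / (Pq q j * Pq q (M - j)).
Proof.
  intros H Hj. rewrite <- (G_closed q M j Hj). field. split; apply Pq_nz; auto.
Qed.

Lemma G_bound q : (Cmod q < 1)%R -> exists B, (0 <= B)%R /\ forall M j, (j <= M)%nat -> (Cmod (G q M j) <= B)%R.
Proof.
  intros H. destruct (Cconv_bounded _ _ (Pq_conv q H)) as [U [HU0 HU]].
  destruct (Cconv_lb _ _ (Pq_conv q H) (PQ_nz q H) (fun n => Pq_nz q n H)) as [d [Hd Hdn]].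
  exists (U / (d * d))%R. split. apply Rdiv_le_0_compat; nra.
  intros M j Hj. rewrite G_eq by auto. rewrite Cmod_div, Cmod_mult by (apply Cmult_nz; apply Pq_nz; auto).
  pose proof (Hdn j). pose proof (Hdn (M - j)%nat).
  unfold Rdiv. apply Rmult_le_compat; auto. apply Cmod_ge_0. left; apply Rinv_0_lt_compat.
  apply Rmult_lt_0_compat; lra. apply Rinv_le_contravar. nra. apply Rmult_le_compat; lra.
Qed.

Lemma G_lim1 q m : (Cmod q < 1)%R -> Cconv (fun N => G q (2 * N) (N + m)) (/ qpoch_inf (q * q) (q * q)).
Proof.
  intros H. set (PQ := qpoch_inf (q * q) (q * q)).
  apply Cconv_ext with (fun N => Pq q (2 * N) * / (Pq q (N + m) * Pq q (N - m))).
  { exists m. intros N HN. rewrite G_eq by (auto; lia). replace (2 * N - (N + m))%nat with (N - m)%nat by lia. auto. }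
  replace (/ PQ) with (PQ * / (PQ * PQ)) by (field; apply PQ_nz; auto).
  apply Cconv_mult. apply (Cconv_subseq (Pq q) PQ (fun N => 2 * N)%nat). intros; lia. apply Pq_conv; auto.
  apply Cconv_inv. apply Cconv_mult. apply (Cconv_shift (Pq q) PQ m). apply Pq_conv; auto.
  apply Cconv_subn. apply Pq_conv; auto. apply Cmult_nz; apply PQ_nz; auto.
  intros n. apply Cmult_nz; apply Pq_nz; auto.
Qed.

Lemma G_lim2 q m : (Cmod q < 1)%R -> Cconv (fun N => G q (2 * N) (N - 1 - m)) (/ qpoch_inf (q * q) (q * q)).
Proof.
  intros H. set (PQ := qpoch_inf (q * q) (q * q)).
  apply Cconv_ext with (fun N => Pq q (2 * N) * / (Pq q (N - (m + 1)) * Pq q (N + (m + 1)))).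
  { exists (m + 1)%nat. intros N HN. rewrite G_eq by (auto; lia). replace (2 * N - (N - 1 - m))%nat with (N + (m + 1))%nat by lia.
    replace (N - 1 - m)%nat with (N - (m + 1))%nat by lia. auto. }
  replace (/ PQ) with (PQ * / (PQ * PQ)) by (field; apply PQ_nz; auto).
  apply Cconv_mult. apply (Cconv_subseq (Pq q) PQ (fun N => 2 * N)%nat). intros; lia. apply Pq_conv; auto.
  apply Cconv_inv. apply Cconv_mult. apply Cconv_subn. apply Pq_conv; auto.
  apply (Cconv_shift (Pq q) PQ (m + 1)). apply Pq_conv; auto. apply Cmult_nz; apply PQ_nz; auto.
  intros n. apply Cmult_nz; apply Pq_nz; auto.
Qed.

Definition Theta1 (q : C) := CSeries (fun m => q ^ ((m + 1) * (m + 1))).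

Lemma pow_sq_bound (q : C) f m : (Cmod q < 1)%R -> (m <= f)%nat -> (Cmod (q ^ f) <= 1 * Cmod q ^ m)%R.
Proof.
  intros H Hm. rewrite Cmod_pow, Rmult_1_l. apply pow_le_mono; auto. split; [apply Cmod_ge_0|lra].
Qed.

Lemma Theta1_sum q : (Cmod q < 1)%R -> Csum (fun m => q ^ ((m + 1) * (m + 1))) (Theta1 q).
Proof.
  intros H. destruct (geom_sum (fun m => q ^ ((m + 1) * (m + 1))) 1 (Cmod q)) as [S [HS _]].
  split; [apply Cmod_ge_0|auto]. intros n. apply pow_sq_bound; auto. nia.
  unfold Theta1. rewrite (Csum_CSeries _ _ HS). auto.
Qed.

Lemma qp_mq q N : qpoch_part (- q) (q * q) N = Cprod (fun j => 1 + q ^ (2 * j + 1)) N.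
Proof. rewrite qp_Cprod. apply Cprod_ext. intros j _. rewrite Cpow_sq. change (q ^ (2 * j + 1)) with (q ^ (2 * j + 1)).
  rewrite Nat.add_1_r. change (q ^ S (2 * j)) with (q * q ^ (2 * j)). ring. Qed.

Theorem jtp (q : C) : q <> 0 -> (Cmod q < 1)%R ->
  qpoch_inf (q * q) (q * q) * qpoch_inf (- q) (q * q) * qpoch_inf (- q) (q * q) = 1 + 2 * Theta1 q.
Proof.
  intros Hq0 Hq. set (PQ := qpoch_inf (q * q) (q * q)). assert (HPQ : PQ <> 0) by (apply PQ_nz; auto).
  destruct (G_bound q Hq) as [B [HB0 HB]].
  assert (Hr : (0 <= Cmod q < 1)%R) by (split; [apply Cmod_ge_0|auto]).
  destruct (tannery (fun N m => G q (2 * N) (N - 1 - m) * q ^ ((m + 1) * (m + 1)))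
                    (fun m => / PQ * q ^ ((m + 1) * (m + 1))) (fun N => N) B (Cmod q) Hr) as [H1 [HS1 HC1]].
  { intros; lia. }
  { intros N m Hm. rewrite Cmod_mult. apply Rmult_le_compat; try apply Cmod_ge_0. apply HB. lia.
    rewrite Cmod_pow. apply pow_le_mono. lra. nia. }
  { intros m. apply Cconv_mult. apply G_lim2; auto. apply Cconv_const. }
  destruct (tannery (fun N m => G q (2 * N) (N + m) * q ^ (m * m))
                    (fun m => / PQ * q ^ (m * m)) (fun N => (N + 1)%nat) B (Cmod q) Hr) as [H2 [HS2 HC2]].
  { intros; lia. }
  { intros N m Hm. rewrite Cmod_mult. apply Rmult_le_compat; try apply Cmod_ge_0. apply HB. lia.
    rewrite Cmod_pow. apply pow_le_mono. lra. nia. }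
  { intros m. apply Cconv_mult. apply G_lim1; auto. apply Cconv_const. }
  assert (E1 : qpoch_inf (- q) (q * q) * qpoch_inf (- q) (q * q) = H1 + H2).
  { apply (Cconv_unique (fun N => qpoch_part (- q) (q * q) N * qpoch_part (- q) (q * q) N)).
    apply Cconv_mult; apply qp_conv; apply CmodQ; auto.
    apply Cconv_ext with (fun N => Cpsum (fun m => G q (2 * N) (N - 1 - m) * q ^ ((m + 1) * (m + 1))) N +
                                    Cpsum (fun m => G q (2 * N) (N + m) * q ^ (m * m)) (N + 1)).
    { exists 1%nat. intros N HN. rewrite <- (fin_jtp q N Hq0 HN). rewrite qp_mq. simpl. ring. }
    apply Cconv_plus; auto. }
  pose proof (Theta1_sum q Hq) as HT1.
  destruct (geom_sum (fun m => q ^ (m * m)) 1 (Cmod q) Hr) as [T0 [HT0 _]].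
  { intros n. apply pow_sq_bound; auto. nia. }
  assert (ET0 : T0 - 1 = Theta1 q).
  { pose proof (Csum_shift _ _ HT0) as HH. simpl in HH. replace (RtoC 1) with (q ^ (0 * 0)) by reflexivity.
    apply (Cconv_unique (Cpsum (fun k => q ^ (S k * S k)))); auto.
    eapply Cconv_ext_all; [|exact HT1]. intros n. apply Cpsum_ext. intros k _. apply Cpow_eq. lia. }
  assert (EH1 : H1 = / PQ * Theta1 q) by (apply (Cconv_unique _ _ _ HS1); apply Csum_scal; auto).
  assert (EH2 : H2 = / PQ * T0) by (apply (Cconv_unique _ _ _ HS2); apply Csum_scal; auto).
  transitivity (PQ * (qpoch_inf (- q) (q * q) * qpoch_inf (- q) (q * q))). ring.
  rewrite E1, EH1, EH2. replace T0 with (1 + Theta1 q) by (rewrite <- ET0; ring). field. auto.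
Qed.

Lemma qiQQ_nz (Q : C) : (Cmod Q < 1)%R -> qpoch_inf Q Q <> 0.
Proof.
  intros H. apply qi_nonzero; auto. intros k.
  change (Q * Q ^ k) with (Q ^ (S k)). apply one_minus_nz. apply Cmod_lt1_pow. auto.
Qed.

Lemma qpQQ_nz (Q : C) n : (Cmod Q < 1)%R -> qpoch_part Q Q n <> 0.
Proof.
  intros H. rewrite qp_Cprod. induction n. simpl. intro E. injection E. lra.
  rewrite Cprod_S. apply Cmult_nz; auto. change (Q * Q ^ n) with (Q ^ (S n)).
  apply one_minus_nz. apply Cmod_lt1_pow. auto.
Qed.

Definition cc (Q : C) n := qpoch_part (-1) Q n / qpoch_part Q Q n.

Lemma cc_0 Q : cc Q 0 = 1.
Proof. unfold cc. simpl. field. Qed.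

Lemma cc_rec Q n : (Cmod Q < 1)%R -> cc Q (S n) * (1 - Q ^ (S n)) = cc Q n * (1 + Q ^ n).
Proof.
  intros H. unfold cc. simpl qpoch_part. rewrite !(pow_n_Cpow Q n).
  change (Q ^ S n) with (Q * Q ^ n).
  field. split. apply qpQQ_nz; auto. cbv beta. change (Q * Q ^ n) with (Q ^ (S n)). apply one_minus_nz. apply Cmod_lt1_pow. auto.
Qed.

Lemma cc_bound Q : (Cmod Q < 1)%R -> exists K, (0 <= K)%R /\ forall n, (Cmod (cc Q n) <= K)%R.
Proof.
  intros H. destruct (Cconv_bounded _ _ (qp_conv (-1) Q H)) as [U [HU0 HU]].
  destruct (Cconv_lb _ _ (qp_conv Q Q H) (qiQQ_nz Q H) (fun n => qpQQ_nz Q n H)) as [d [Hd Hdn]].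
  exists (U / d)%R. split. apply Rdiv_le_0_compat; lra.
  intros n. unfold cc. rewrite Cmod_div by (apply qpQQ_nz; auto).
  unfold Rdiv. apply Rmult_le_compat; auto. apply Cmod_ge_0. left; apply Rinv_0_lt_compat.
  specialize (Hdn n); lra. apply Rinv_le_contravar; auto.
Qed.

Definition FF (Q z : C) := CSeries (fun n => cc Q n * z ^ n).

Lemma FF_sum Q z : (Cmod Q < 1)%R -> (Cmod z < 1)%R -> Csum (fun n => cc Q n * z ^ n) (FF Q z).
Proof.
  intros HQ Hz. destruct (cc_bound Q HQ) as [K [HK0 HK]].
  destruct (geom_sum (fun n => cc Q n * z ^ n) K (Cmod z)) as [S [HS _]].
  split; [apply Cmod_ge_0|auto]. intros n. rewrite Cmod_mult, Cmod_pow.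
  apply Rmult_le_compat_r; auto. apply pow_le, Cmod_ge_0.
  unfold FF. rewrite (Csum_CSeries _ _ HS). auto.
Qed.

Lemma FF_near1 Q : (Cmod Q < 1)%R -> exists K, (0 <= K)%R /\ forall z, (Cmod z < 1)%R ->
  (Cmod (FF Q z - 1) <= K * Cmod z / (1 - Cmod z))%R.
Proof.
  intros HQ. destruct (cc_bound Q HQ) as [K [HK0 HK]]. exists K. split; auto. intros z Hz.
  destruct (geom_sum (fun n => cc Q n * z ^ n) K (Cmod z)) as [S [HS Ht]].
  split; [apply Cmod_ge_0|auto]. intros n. rewrite Cmod_mult, Cmod_pow.
  apply Rmult_le_compat_r; auto. apply pow_le, Cmod_ge_0.
  unfold FF. rewrite (Csum_CSeries _ _ HS). specialize (Ht 1%nat). simpl Cpsum in Ht.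
  rewrite cc_0 in Ht. replace (0 + 1 * 1) with (RtoC 1) in Ht by ring. simpl pow in Ht. rewrite Rmult_1_r in Ht. auto.
Qed.

Lemma FF_func Q z : (Cmod Q < 1)%R -> (Cmod z < 1)%R -> FF Q z * (1 - z) = FF Q (Q * z) * (1 + z).
Proof.
  intros HQ Hz.
  assert (HQz : (Cmod (Q * z) < 1)%R) by (rewrite Cmod_mult; pose proof (Cmod_ge_0 Q); pose proof (Cmod_ge_0 z); nra).
  assert (Hfin : forall N, Cpsum (fun n => cc Q n * z ^ n - cc Q n * (Q * z) ^ n) (S N) =
                           z * Cpsum (fun n => cc Q n * z ^ n + cc Q n * (Q * z) ^ n) N).
  { induction N. simpl. ring. rewrite Cpsum_S, IHN, (Cpsum_S (fun n => cc Q n * z ^ n + _)).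
    rewrite !Cpow_mult. pose proof (cc_rec Q N HQ) as R.
    transitivity (z * Cpsum (fun n : nat => cc Q n * z ^ n + cc Q n * (Q * z) ^ n) N + z ^ S N * (cc Q (S N) * (1 - Q ^ S N))). ring.
    rewrite R. simpl. ring. }
  assert (E : FF Q z - FF Q (Q * z) = z * (FF Q z + FF Q (Q * z))).
  { apply (Cconv_unique (fun N => Cpsum (fun n => cc Q n * z ^ n - cc Q n * (Q * z) ^ n) (S N))).
    apply (Cconv_subseq (Cpsum _) _ S). auto. apply Csum_minus; apply FF_sum; auto.
    eapply Cconv_ext_all. intros N. symmetry. apply Hfin.
    apply Cconv_scal. apply Csum_plus; apply FF_sum; auto. }
  transitivity (FF Q z - z * FF Q z). ring. 
  replace (FF Q z) with (FF Q (Q * z) + z * (FF Q z + FF Q (Q * z))) at 1 by (rewrite <- E; ring). ring.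
Qed.

Lemma Cmod_zQ (z Q : C) N : (Cmod Q < 1)%R -> (Cmod (z * Q ^ N) <= Cmod z)%R.
Proof.
  intros HQ. rewrite Cmod_mult, Cmod_pow. pose proof (pow_le1 (Cmod Q) N ltac:(split; [apply Cmod_ge_0|lra])).
  pose proof (Cmod_ge_0 z). nra.
Qed.

Lemma FF_iter Q z N : (Cmod Q < 1)%R -> (Cmod z < 1)%R ->
  FF Q z * qpoch_part z Q N = qpoch_part (- z) Q N * FF Q (z * Q ^ N).
Proof.
  intros HQ Hz. induction N.
  - simpl. replace (z * 1) with z by ring. ring.
  - simpl qpoch_part. rewrite (pow_n_Cpow Q N).
    transitivity ((FF Q z * qpoch_part z Q N) * (1 - z * Q ^ N)). ring. rewrite IHN.
    assert (Hw : (Cmod (z * Q ^ N) < 1)%R) by (eapply Rle_lt_trans; [apply Cmod_zQ|]; auto).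
    pose proof (FF_func Q (z * Q ^ N) HQ Hw) as Ef.
    replace (Q * (z * Q ^ N)) with (z * Q ^ S N) in Ef by (simpl; ring).
    transitivity (qpoch_part (- z) Q N * (FF Q (z * Q ^ N) * (1 - z * Q ^ N))). ring.
    rewrite Ef. ring.
Qed.

Theorem qbinom Q z : (Cmod Q < 1)%R -> (Cmod z < 1)%R -> FF Q z * qpoch_inf z Q = qpoch_inf (- z) Q.
Proof.
  intros HQ Hz. apply (Cconv_unique (fun N => FF Q z * qpoch_part z Q N)).
  apply Cconv_scal. apply qp_conv; auto.
  eapply Cconv_ext_all. intros N. symmetry. apply FF_iter; auto.
  replace (qpoch_inf (- z) Q) with (qpoch_inf (- z) Q * 1) by ring.
  apply Cconv_mult. apply qp_conv; auto.
  destruct (FF_near1 Q HQ) as [K [HK0 HK]].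
  intros eps He.
  destruct (pow_small (Cmod Q) ltac:(split; [apply Cmod_ge_0|auto]) (eps * (1 - Cmod z) / ((K + 1) * (Cmod z + 1)))%R) as [N0 HN0].
  { apply Rdiv_lt_0_compat. apply Rmult_lt_0_compat; lra. pose proof (Cmod_ge_0 z). apply Rmult_lt_0_compat; lra. }
  exists N0. intros N HN. pose proof (HN0 N HN) as HQN.
  assert (Hw : (Cmod (z * Q ^ N) < 1)%R) by (eapply Rle_lt_trans; [apply Cmod_zQ|]; auto).
  eapply Rle_lt_trans; [apply HK; auto|].
  pose proof (Cmod_zQ z Q N HQ). pose proof (Cmod_ge_0 (z * Q ^ N)). pose proof (Cmod_ge_0 z).
  assert (Cmod (z * Q ^ N) <= Cmod z * Cmod Q ^ N)%R by (rewrite Cmod_mult, Cmod_pow; lra).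
  apply Rle_lt_trans with (K * (Cmod z * Cmod Q ^ N) / (1 - Cmod z))%R.
  { unfold Rdiv. apply Rmult_le_compat. nra. left. apply Rinv_0_lt_compat. lra. nra.
    apply Rinv_le_contravar; lra. }
  pose proof (pow_le (Cmod Q) N (Cmod_ge_0 Q)).
  apply Rle_lt_trans with ((K + 1) * (Cmod z + 1) * Cmod Q ^ N / (1 - Cmod z))%R.
  { unfold Rdiv. apply Rmult_le_compat_r. left; apply Rinv_0_lt_compat; lra. nra. }
  apply Rlt_le_trans with ((K + 1) * (Cmod z + 1) * (eps * (1 - Cmod z) / ((K + 1) * (Cmod z + 1))) / (1 - Cmod z))%R.
  { unfold Rdiv. apply Rmult_lt_compat_r. apply Rinv_0_lt_compat; lra. apply Rmult_lt_compat_l; auto. nra. }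
  right. field. split; lra.
Qed.

Lemma interleave (x : C) : (Cmod x < 1)%R -> qpoch_inf x x = qpoch_inf x (x * x) * qpoch_inf (x * x) (x * x).
Proof.
  intros Hx. pose proof (CmodQ x Hx) as Hxx.
  apply (Cconv_unique (fun N => qpoch_part x x (2 * N))).
  apply (Cconv_subseq (qpoch_part x x) _ (fun N => 2 * N)%nat). intros; lia. apply qp_conv; auto.
  eapply Cconv_ext_all. 2: apply Cconv_mult; apply qp_conv; auto.
  intros N. simpl. rewrite !qp_Cprod. rewrite (Cprod_even_odd _ N). f_equal; apply Cprod_ext; intros k _.
  rewrite Cpow_sq. auto. rewrite Cpow_sq. rewrite Nat.add_1_r. change (x ^ S (2 * k)) with (x * x ^ (2 * k)). ring.
Qed.

Lemma euler (x : C) : (Cmod x < 1)%R -> qpoch_inf (- x) x * qpoch_inf x (x * x) = 1.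
Proof.
  intros Hx. pose proof (CmodQ x Hx) as Hxx.
  assert (E1 : qpoch_inf (- x) x * qpoch_inf x x = qpoch_inf (x * x) (x * x)).
  { apply qi_mult; auto. intros n. rewrite !qp_Cprod, <- Cprod_mult. apply Cprod_ext. intros k _.
    rewrite Cpow_sq, Nat.mul_comm, Cpow_mul. change ((x ^ k) ^ 2) with (x ^ k * (x ^ k * 1)). ring. }
  pose proof (interleave x Hx) as E2. pose proof (qiQQ_nz x Hx) as Hnz.
  assert (HC : qpoch_inf (x * x) (x * x) <> 0).
  { intro E. apply Hnz. rewrite E2, E. ring. }
  replace (qpoch_inf (- x) x * qpoch_inf x (x * x)) with
    (qpoch_inf (- x) x * (qpoch_inf x (x * x) * qpoch_inf (x * x) (x * x)) / qpoch_inf (x * x) (x * x)) by (field; auto).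
  rewrite <- E2, E1. field. auto.
Qed.

Lemma Ci_sq : Ci * Ci = - (1).
Proof. apply injective_projections; simpl; ring. Qed.

Lemma Cinv_Ci : / Ci = - Ci.
Proof.
  assert (Ci <> 0) by (intro E; injection E; lra).
  transitivity (/ Ci * - (Ci * Ci)). rewrite Ci_sq. ring.
  field. auto.
Qed.

Lemma Cpow_1n n : (RtoC 1) ^ n = 1.
Proof. induction n; simpl; auto. rewrite IHn. ring. Qed.

Lemma m1_even k : (- (1)) ^ (2 * k) = 1.
Proof. rewrite Cpow_mul. replace ((- (1)) ^ 2) with (RtoC 1) by (simpl; ring). apply Cpow_1n. Qed.

Lemma m1_odd k : (- (1)) ^ (2 * k + 1) = - (1).
Proof. rewrite Cpow_add, m1_even. simpl. ring. Qed.

Lemma Cpow_opp (x : C) n : (- x) ^ n = (- (1)) ^ n * x ^ n.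
Proof. rewrite <- Cpow_mult. f_equal. ring. Qed.

Lemma m1_sq n : (- (1)) ^ (n * n) = (- (1)) ^ n.
Proof.
  destruct (Nat.Even_or_Odd n) as [[p Hp]|[p Hp]]; subst.
  - replace (2 * p * (2 * p))%nat with (2 * (2 * p * p))%nat by lia. rewrite !m1_even. auto.
  - replace ((2 * p + 1) * (2 * p + 1))%nat with (2 * (2 * p * p + 2 * p) + 1)%nat by lia. rewrite !m1_odd. auto.
Qed.

Lemma Csum_sub_exists a (K r : R) (phi : nat -> nat) : (0 <= r < 1)%R -> (forall n, (Cmod (a n) <= K * r ^ n)%R) ->
  (forall k, (k <= phi k)%nat) -> exists S, Csum (fun k => a (phi k)) S.
Proof.
  intros Hr Ha Hp. destruct (geom_sum (fun k => a (phi k)) K r Hr) as [S [HS _]].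
  intros n. eapply Rle_trans; [apply Ha|]. assert (0 <= K)%R.
  { pose proof (Ha 0%nat). pose proof (Cmod_ge_0 (a 0%nat)). simpl in *. lra. }
  apply Rmult_le_compat_l; auto. apply pow_le_mono; auto. lra.
  exists S; auto.
Qed.

Definition Tm (q : C) (n : nat) : C :=
  pow_n q n * qpoch_inf (- pow_n q (n + 1)) q * qpoch_inf (pow_n q (n + 1)) q
    / (qpoch_inf (Ci * pow_n q n) q * qpoch_inf (/ Ci * pow_n q n) q).

Lemma Tm_eq (q : C) m : (Cmod q < 1)%R ->
  Tm q (S m) = (qpoch_inf (q * q) (q * q) * qpoch_inf (q * q) ((q * q) * (q * q))) / 2 * (cc (q * q) (S m) * q ^ (S m)).
Proof.
  intros Hq. set (Q := q * q). assert (HQ : (Cmod Q < 1)%R) by (apply CmodQ; auto).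
  set (n := S m). unfold Tm. rewrite !(pow_n_Cpow q n), !(pow_n_Cpow q (n + 1)).
  assert (Ea : qpoch_inf (- q ^ (n + 1)) q * qpoch_inf (q ^ (n + 1)) q = qpoch_inf (Q ^ (n + 1)) Q).
  { apply qi_mult; auto. intros N. rewrite !qp_Cprod, <- Cprod_mult. apply Cprod_ext. intros k _.
    unfold Q. rewrite !Cpow_mult. ring. }
  assert (Eb : qpoch_inf (Ci * q ^ n) q * qpoch_inf (/ Ci * q ^ n) q = qpoch_inf (- Q ^ n) Q).
  { apply qi_mult; auto. intros N. rewrite !qp_Cprod, <- Cprod_mult. apply Cprod_ext. intros k _.
    unfold Q. rewrite !Cpow_mult, Cinv_Ci.
    transitivity (1 - (Ci * Ci) * (q ^ n * q ^ n) * (q ^ k * q ^ k)). ring. rewrite Ci_sq. ring. }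
  transitivity (q ^ n * (qpoch_inf (- q ^ (n + 1)) q * qpoch_inf (q ^ (n + 1)) q) /
     (qpoch_inf (Ci * q ^ n) q * qpoch_inf (/ Ci * q ^ n) q)). unfold Cdiv. ring.
  rewrite Ea, Eb. clear Ea Eb.
  set (X := qpoch_inf (Q ^ (n + 1)) Q). set (Y := qpoch_inf (- Q ^ n) Q).
  assert (HX : qpoch_inf Q Q = qpoch_part Q Q n * X).
  { rewrite (qi_split Q Q n HQ). rewrite (pow_n_Cpow Q n). unfold X. rewrite Nat.add_1_r. auto. }
  assert (HY : qpoch_inf (- Q) Q = qpoch_part (- Q) Q m * Y).
  { rewrite (qi_split (- Q) Q m HQ). rewrite (pow_n_Cpow Q m). unfold Y, n.
    replace (- Q * Q ^ m) with (- Q ^ S m) by (simpl; ring). auto. }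
  pose proof (euler Q HQ) as Eu. rewrite HY in Eu.
  assert (Hc : cc Q n = 2 * qpoch_part (- Q) Q m / qpoch_part Q Q n).
  { unfold cc, n. replace (S m) with (1 + m)%nat by lia. rewrite qp_split.
    replace (-1 * pow_n Q 1) with (- Q) by (rewrite (pow_n_Cpow Q 1); simpl; ring). simpl (qpoch_part (-1) Q 1).
    replace (1 + m)%nat with (S m) by lia. f_equal. change one with (RtoC 1). ring. }
  rewrite HX, Hc.
  assert (HP : qpoch_part Q Q n <> 0) by (apply qpQQ_nz; auto).
  assert (HYnz : Y <> 0) by (intro E; rewrite E in Eu; injection Eu; intros; lra).
  transitivity (q ^ n * X * (qpoch_part (- Q) Q m * Y * qpoch_inf Q (Q * Q)) / Y).
  rewrite Eu. field. auto. field. auto.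
Qed.

Lemma m1_eq : (-1 : C) = - (1).
Proof. apply injective_projections; simpl; ring. Qed.

Lemma RtoC_pow_n (x : R) n : RtoC (@pow_n R_Ring x n) = (RtoC x) ^ n.
Proof. induction n. reflexivity. simpl. rewrite <- IHn. apply RtoC_mult. Qed.

Lemma Csum_zero (f : nat -> C) : (forall k, f k = 0) -> Csum f 0.
Proof.
  intros H. unfold Csum. refine (Cconv_ext_all (fun _ => RtoC 0) _ _ _ (Cconv_const _)).
  intros n. rewrite <- (Cpsum_zero n). apply Cpsum_ext. intros; auto.
Qed.

Lemma pow_n_0 k : (1 <= k)%nat -> @eq C (pow_n (RtoC 0) k) (RtoC 0).
Proof. intros H. rewrite (pow_n_Cpow 0 k). replace k with (S (k - 1)) by lia. simpl. ring. Qed.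

Lemma main_nz (q : C) (Hq0 : q <> 0) (Hq : (Cmod q < 1)%R) :
  Sbar Ci q =
    CSeries (fun m => let n := S m in pow_n q (n*n))
    - CSeries (fun m => let n := S m in pow_n (-1) n * pow_n q (2*(n*n)))
  /\ Sbar1 Ci q =
    CSeries (fun m => let n := S m in pow_n q ((2*n-1)*(2*n-1)))
  /\ Sbar2 Ci q =
    CSeries (fun m => let n := S m in pow_n q ((2*n)*(2*n)))
    - CSeries (fun m => let n := S m in pow_n (-1) n * pow_n q (2*(n*n))).
Proof.
  assert (HQ : (Cmod (q * q) < 1)%R) by (apply CmodQ; auto).
  assert (HQQ : (Cmod (q * q * (q * q)) < 1)%R) by (apply CmodQ; auto).
  assert (Hmq : (Cmod (- q) < 1)%R) by (rewrite Cmod_opp; auto).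
  assert (HmQ : (Cmod (- (q * q)) < 1)%R) by (rewrite Cmod_opp; auto).
  pose proof (jtp q Hq0 Hq) as Jq.
  pose proof (jtp (- q) ltac:(intro E; apply Hq0; replace q with (- - q) by ring; rewrite E; ring) Hmq) as Jmq.
  replace (- q * - q) with (q * q) in Jmq by ring. replace (- - q) with q in Jmq by ring.
  pose proof (jtp (- (q * q)) ltac:(intro E; apply (Cmult_nz q q Hq0 Hq0); replace (q * q) with (- - (q * q)) by ring; rewrite E; ring) HmQ) as JmQ.
  replace (- (q * q) * - (q * q)) with (q * q * (q * q)) in JmQ by ring. replace (- - (q * q)) with (q * q) in JmQ by ring.
  pose proof (interleave (q * q) HQ) as IL.
  set (R := qpoch_inf (q * q) (q * q) * qpoch_inf (q * q) (q * q * (q * q))).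
  assert (HR : R = 1 + 2 * Theta1 (- (q * q))).
  { rewrite <- JmQ. unfold R. rewrite IL. ring. }
  assert (HE : qpoch_inf q (q * q) * qpoch_inf (- q) (q * q) = qpoch_inf (q * q) (q * q * (q * q))).
  { apply qi_mult; auto. intros N. rewrite !qp_Cprod, <- Cprod_mult. apply Cprod_ext. intros k _.
    rewrite (Cpow_mult (q * q) (q * q) k). ring. }
  pose proof (qbinom (q * q) q HQ Hq) as B1.
  pose proof (qbinom (q * q) (- q) HQ Hmq) as B2. replace (- - q) with q in B2 by ring.
  assert (RF1 : R * FF (q * q) q = 1 + 2 * Theta1 q).
  { rewrite <- Jq. unfold R. rewrite <- HE.
    transitivity (qpoch_inf (q * q) (q * q) * qpoch_inf (- q) (q * q) * (FF (q * q) q * qpoch_inf q (q * q))). ring.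
    rewrite B1. ring. }
  assert (RF2 : R * FF (q * q) (- q) = 1 + 2 * Theta1 (- q)).
  { rewrite <- Jmq. unfold R. rewrite <- HE.
    transitivity (qpoch_inf (q * q) (q * q) * qpoch_inf q (q * q) * (FF (q * q) (- q) * qpoch_inf (- q) (q * q))). ring.
    rewrite B2. ring. }
  set (a := fun n => cc (q * q) n * q ^ n).
  pose proof (FF_sum (q * q) q HQ Hq) as HF1. fold a in HF1.
  destruct (cc_bound (q * q) HQ) as [K [HK0 HK]].
  assert (Ha : forall n, (Cmod (a n) <= K * Cmod q ^ n)%R).
  { intros n. unfold a. rewrite Cmod_mult, Cmod_pow. apply Rmult_le_compat_r; auto. apply pow_le, Cmod_ge_0. }
  assert (Hr : (0 <= Cmod q < 1)%R) by (split; [apply Cmod_ge_0|auto]).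
  destruct (Csum_sub_exists a K (Cmod q) (fun k => 2 * k)%nat Hr Ha ltac:(intros; cbv beta; lia)) as [Ev HEv].
  destruct (Csum_sub_exists a K (Cmod q) (fun k => 2 * k + 1)%nat Hr Ha ltac:(intros; cbv beta; lia)) as [Od HOd].
  pose proof (Csum_even_odd _ _ _ _ HF1 HEv HOd) as EF1.
  pose proof (FF_sum (q * q) (- q) HQ Hmq) as HF2.
  assert (EF2 : FF (q * q) (- q) = Ev - Od).
  { apply (Csum_even_odd _ _ _ _ HF2).
    - eapply Csum_ext; [|exact HEv]. intros k. unfold a. rewrite Cpow_opp, m1_even. ring.
    - replace (- Od) with (- (1) * Od) by ring. eapply Csum_ext; [|apply Csum_scal; exact HOd].
      intros k. unfold a. rewrite Cpow_opp, m1_odd. ring. }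
  set (b := fun m => q ^ ((m + 1) * (m + 1))).
  pose proof (Theta1_sum q Hq) as HT. fold b in HT.
  assert (Hb : forall n, (Cmod (b n) <= 1 * Cmod q ^ n)%R) by (intros n; apply pow_sq_bound; auto; nia).
  destruct (Csum_sub_exists b 1 (Cmod q) (fun k => 2 * k)%nat Hr Hb ltac:(intros; cbv beta; lia)) as [A HA].
  destruct (Csum_sub_exists b 1 (Cmod q) (fun k => 2 * k + 1)%nat Hr Hb ltac:(intros; cbv beta; lia)) as [Bv HB].
  pose proof (Csum_even_odd _ _ _ _ HT HA HB) as ET1.
  pose proof (Theta1_sum (- q) Hmq) as HT2.
  assert (ET2 : Theta1 (- q) = - A + Bv).
  { apply (Csum_even_odd _ _ _ _ HT2).
    - replace (- A) with (- (1) * A) by ring. eapply Csum_ext; [|apply Csum_scal; exact HA].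
      intros k. unfold b. rewrite Cpow_opp. replace ((2 * k + 1) * (2 * k + 1))%nat with (2 * (2 * k * k + 2 * k) + 1)%nat by lia.
      rewrite m1_odd. ring.
    - eapply Csum_ext; [|exact HB]. intros k. unfold b. rewrite Cpow_opp.
      replace ((2 * k + 1 + 1) * (2 * k + 1 + 1))%nat with (2 * (2 * (k + 1) * (k + 1)))%nat by lia.
      rewrite m1_even. ring. }
  assert (RHS1 : CSeries (fun m => let n := S m in pow_n q (n*n)) = Theta1 q).
  { apply Csum_CSeries. eapply Csum_ext; [|exact HT]. intros k. unfold b. cbv zeta. rewrite (pow_n_Cpow q (S k * S k)). apply Cpow_eq. lia. }
  assert (RHS2 : CSeries (fun m => let n := S m in pow_n (-1) n * pow_n q (2*(n*n))) = Theta1 (- (q * q))).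
  { apply Csum_CSeries. eapply Csum_ext; [|exact (Theta1_sum _ HmQ)]. intros k. cbv zeta.
    rewrite RtoC_pow_n, (pow_n_Cpow q (2 * (S k * S k))), m1_eq, Cpow_opp, Nat.add_1_r, m1_sq, Cpow_sq. auto. }
  assert (RHS3 : CSeries (fun m => let n := S m in pow_n q ((2*n-1)*(2*n-1))) = A).
  { apply Csum_CSeries. eapply Csum_ext; [|exact HA]. intros k. unfold b. cbv zeta. rewrite (pow_n_Cpow q ((2 * S k - 1) * (2 * S k - 1))). apply Cpow_eq.
    replace (2 * S k - 1)%nat with (2 * k + 1)%nat by lia. auto. }
  assert (RHS4 : CSeries (fun m => let n := S m in pow_n q ((2*n)*(2*n))) = Bv).
  { apply Csum_CSeries. eapply Csum_ext; [|exact HB]. intros k. unfold b. cbv zeta. rewrite (pow_n_Cpow q (2 * S k * (2 * S k))). apply Cpow_eq.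
    lia. }
  rewrite RHS1, RHS2, RHS3, RHS4.
  assert (H2 : (2 : C) <> 0) by (intro E; injection E; lra).
  split; [|split].
  -
    assert (S0 : Csum (fun m => Tm q (S m)) (R / 2 * (FF (q * q) q - 1))).
    { replace (RtoC 1) with (a 0%nat) by (unfold a; rewrite cc_0; simpl; ring).
      eapply Csum_ext; [|apply Csum_scal; apply Csum_shift; exact HF1].
      intros k. rewrite Tm_eq by auto. unfold R, a. auto. }
    replace (Sbar Ci q) with (CSeries (fun m => Tm q (S m))) by reflexivity. rewrite (Csum_CSeries _ _ S0).
    transitivity ((R * FF (q * q) q - R) / 2). field. auto. rewrite RF1, HR. field. auto.
  -
    assert (S1 : Csum (fun n => Tm q (2 * n + 1)) (R / 2 * Od)).
    { eapply Csum_ext; [|apply Csum_scal; exact HOd].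
      intros k. cbv beta. replace (2 * k + 1)%nat with (S (2 * k)) by lia. rewrite Tm_eq by auto. unfold R, a. auto. }
    rewrite EF1 in RF1. rewrite EF2 in RF2. rewrite ET1 in RF1. rewrite ET2 in RF2.
    assert (ROd : R * Od = 2 * A).
    { transitivity ((R * (Ev + Od) - R * (Ev - Od)) / 2). field; auto. rewrite RF1, RF2. field; auto. }
    transitivity (R / 2 * Od).
    { unfold Sbar1. apply Csum_CSeries. eapply Csum_ext; [|exact S1]. intros k. unfold Tm.
      replace (2 * k + 1 + 1)%nat with (2 * k + 2)%nat by lia. reflexivity. }
    transitivity (R * Od / 2). field; auto. rewrite ROd. field; auto.
  -
    assert (S2 : Csum (fun m => Tm q (2 * S m)) (R / 2 * (Ev - 1))).
    { replace (RtoC 1) with (a (2 * 0)%nat) by (unfold a; rewrite cc_0; simpl; ring).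
      eapply Csum_ext; [|apply Csum_scal; apply (Csum_shift (fun k => a (2 * k)%nat)); exact HEv].
      intros k. cbv beta. replace (2 * S k)%nat with (S (2 * k + 1)) by lia. rewrite Tm_eq by auto. unfold R, a. auto. }
    rewrite EF1 in RF1. rewrite EF2 in RF2. rewrite ET1 in RF1. rewrite ET2 in RF2.
    assert (REv : R * Ev = 1 + 2 * Bv).
    { transitivity ((R * (Ev + Od) + R * (Ev - Od)) / 2). field; auto. rewrite RF1, RF2. field; auto. }
    replace (Sbar2 Ci q) with (CSeries (fun m => Tm q (2 * S m))) by reflexivity. rewrite (Csum_CSeries _ _ S2).
    transitivity ((R * Ev - R) / 2). field; auto. rewrite REv, HR. field; auto.
Qed.

Theorem theorem2p15 (q : C) (hq : (Cmod q < 1)%R) :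
  Sbar Ci q =
    CSeries (fun m => let n := S m in pow_n q (n*n))
    - CSeries (fun m => let n := S m in pow_n (-1) n * pow_n q (2*(n*n)))
  /\ Sbar1 Ci q =
    CSeries (fun m => let n := S m in pow_n q ((2*n-1)*(2*n-1)))
  /\ Sbar2 Ci q =
    CSeries (fun m => let n := S m in pow_n q ((2*n)*(2*n)))
    - CSeries (fun m => let n := S m in pow_n (-1) n * pow_n q (2*(n*n))).
Proof.
  destruct (Ceq_dec q 0) as [E|Hq0].
  2: apply main_nz; auto.
  subst q.
  assert (Z1 : forall f : nat -> nat, (forall m, (1 <= f m)%nat) -> CSeries (fun m => pow_n (RtoC 0) (f m)) = 0).
  { intros f Hf. apply Csum_CSeries. apply Csum_zero. intros m. apply pow_n_0. auto. }
  assert (Z2 : forall (g : nat -> C) (f : nat -> nat), (forall m, (1 <= f m)%nat) -> CSeries (fun m => g m * pow_n (RtoC 0) (f m)) = 0).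
  { intros g f Hf. apply Csum_CSeries. apply Csum_zero. intros m. rewrite pow_n_0 by auto. ring. }
  assert (Z3 : forall (g : nat -> C) (f : nat -> nat), (forall m, (1 <= f m)%nat) -> CSeries (fun m => pow_n (RtoC 0) (f m) * g m) = 0).
  { intros g f Hf. apply Csum_CSeries. apply Csum_zero. intros m. rewrite pow_n_0 by auto. ring. }
  assert (E1 : Sbar Ci 0 = 0).
  { unfold Sbar. apply Csum_CSeries. apply Csum_zero. intros m. cbv zeta. rewrite (pow_n_0 (S m)) by lia. unfold Cdiv. ring. }
  assert (E2 : Sbar1 Ci 0 = 0).
  { unfold Sbar1. apply Csum_CSeries. apply Csum_zero. intros m. rewrite (pow_n_0 (2 * m + 1)) by lia. unfold Cdiv. ring. }
  assert (E3 : Sbar2 Ci 0 = 0).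
  { unfold Sbar2. apply Csum_CSeries. apply Csum_zero. intros m. cbv zeta. rewrite (pow_n_0 (2 * S m)) by lia. unfold Cdiv. ring. }
  rewrite E1, E2, E3. cbv zeta.
  rewrite (Z1 (fun m => S m * S m)%nat) by (intros; nia).
  rewrite (Z2 (fun m => RtoC (pow_n (-1)%R (S m))) (fun m => 2 * (S m * S m))%nat) by (intros; nia).
  rewrite (Z1 (fun m => (2 * S m - 1) * (2 * S m - 1))%nat) by (intros; nia).
  rewrite (Z1 (fun m => (2 * S m) * (2 * S m))%nat) by (intros; nia).
  split; [|split]; ring.
Qed.
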